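(* For each even integer $r\ge 2$, there are infinitely many $r$-regular graphs $G$ of even order with $\chi_{la}(G)=3$ and chromatic number $\chi(G)=2$.
   Context: For a connected graph $G=(V,E)$ with $q=|E|$, a local antimagic labeling is a bijection $f:E\to\{1,\dots,q\}$ such that adjacent vertices $x,y$ satisfy $f^+(x)\ne f^+(y)$, where $f^+(x)=\sum f(e)$ over edges $e$ incident to $x$; the local antimagic chromatic number $\chi_{la}(G)$ is the minimum number of distinct values of $f^+$ over all local antimagic labelings $f$ of $G$. *)

(* Defs.v *)
From mathcomp Require Import all_boot.
Set Implicit Arguments. Unset Strict Implicit. Unset Printing Implicit Defensive.

Section Graphs.
Variable n : nat.
Variable adj : rel 'I_n.

Definition simple_graph : Prop := symmetric adj /\ irreflexive adj.

Definition connected_graph : Prop := forall x y : 'I_n, connect adj x y.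

Definition regular (r : nat) : Prop :=
  forall x : 'I_n, #|[set y | adj x y]| = r.

Definition edges : {set {set 'I_n}} :=
  [set e | [exists x, exists y, adj x y && (e == [set x; y])]].

Definition edge_labeling (f : {set 'I_n} -> nat) : Prop :=
  {in edges &, injective f} /\
  (forall e, e \in edges -> 1 <= f e <= #|edges|) /\
  (forall k, 1 <= k <= #|edges| -> exists2 e, e \in edges & f e = k).

Definition fplus (f : {set 'I_n} -> nat) (x : 'I_n) : nat :=
  \sum_(e in edges | x \in e) f e.

Definition local_antimagic (f : {set 'I_n} -> nat) : Prop :=
  edge_labeling f /\ forall x y, adj x y -> fplus f x != fplus f y.

Definition num_induced_colors (f : {set 'I_n} -> nat) : nat :=
  size (undup [seq fplus f x | x <- enum 'I_n]).

Definition chi_la_eq (k : nat) : Prop :=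
  (exists2 f, local_antimagic f & num_induced_colors f = k) /\
  (forall f, local_antimagic f -> k <= num_induced_colors f).

Definition colorable (k : nat) : Prop :=
  exists c : 'I_n -> 'I_k, forall x y, adj x y -> c x != c y.

Definition chromatic_number_eq (k : nat) : Prop :=
  colorable k /\ forall j, j < k -> ~ colorable j.

End Graphs.

(* Main.v *)
Require Import Defs.
From mathcomp Require Import all_boot zify.
Set Implicit Arguments. Unset Strict Implicit. Unset Printing Implicit Defensive.


Lemma pair_sum (F : nat -> nat) k :
  \sum_(0 <= j < k.*2) F j = \sum_(0 <= t < k) (F t.*2 + F t.*2.+1).
Proof.
elim: k => [|k IH]; first by rewrite !big_geq.
rewrite doubleS !big_nat_recr //= ?IH ?addnA //.
Qed.

Lemma sum_mul c (F : nat -> nat) k :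
  \sum_(0 <= t < k) c * F t = c * \sum_(0 <= t < k) F t.
Proof.
elim: k => [|k IH]; first by rewrite !big_geq // muln0.
by rewrite !big_nat_recr //= IH mulnDr.
Qed.

Lemma ceq l k : \sum_(0 <= t < k) (l == t.*2) = (l < k.*2) && ~~ odd l.
Proof.
elim: k => [|k IH]; first by rewrite big_geq.
rewrite big_nat_recr //= IH.
case: eqP => [->|ne]; first by rewrite odd_double ltnn doubleS ltnS leqnSn.
rewrite addn0 doubleS.
have [h|h] : l < k.*2 \/ k.*2 < l by lia.
  by rewrite h ltnW // ltnW.
have -> : (l < k.*2) = false by lia.
case: (ltnP l k.*2.+2) => h2 //=.
have -> : l = k.*2.+1 by lia.
by rewrite /= odd_double.
Qed.

Lemma mod2 m x : 0 < m -> x < m + m -> x %% m = (if x < m then x else x - m).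
Proof.
move=> m0 hx; case: ifP => h; first by rewrite modn_small.
have e : x = (x - m) + m by lia.
by rewrite {1}e modnDr modn_small //; lia.
Qed.

Section Constr.
Variables (m' r : nat).
Local Notation m := m'.+1.
Hypotheses (r2 : 2 <= r) (rev : ~~ odd r) (rm : r <= m).

Definition U (i : 'I_m) : 'I_(m + m) := lshift m i.
Definition W (l : 'I_m) : 'I_(m + m) := rshift m l.
Definition wp (p : 'I_m * 'I_r) : 'I_m := inord ((p.1 + p.2) %% m).
Definition E (p : 'I_m * 'I_r) : {set 'I_(m + m)} := [set U p.1; W (wp p)].
Definition adjG : rel 'I_(m + m) := fun x y => [exists p, E p == [set x; y]].

Lemma UW_neq i l : (U i == W l) = false.
Proof. exact: eq_lrshift. Qed.
Lemma WU_neq i l : (W l == U i) = false.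
Proof. exact: eq_rlshift. Qed.
Lemma U_inj : injective U. Proof. exact: lshift_inj. Qed.
Lemma W_inj : injective W. Proof. exact: rshift_inj. Qed.

Lemma vertex_cases (x : 'I_(m + m)) : (exists i, x = U i) \/ (exists l, x = W l).
Proof. case: (split_ordP x) => [j ->|k ->]; [left|right]; eexists; reflexivity. Qed.

Lemma wp_val p : (wp p : nat) = (p.1 + p.2) %% m.
Proof. by rewrite /wp inordK // ltn_pmod. Qed.

Lemma modinj (i j j' : nat) : j < m -> j' < m -> (i + j) %% m = (i + j') %% m -> j = j'.
Proof.
move=> hj hj' /eqP; rewrite eqn_modDl !modn_small //; by move/eqP.
Qed.

Lemma wp_inj (i : 'I_m) (j j' : 'I_r) : wp (i, j) = wp (i, j') -> j = j'.
Proof.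
move/(congr1 (@nat_of_ord _)); rewrite !wp_val /= => /modinj h; apply: val_inj; apply: h; have := ltn_ord j; have := ltn_ord j'; lia.
Qed.

Lemma E_inj : injective E.
Proof.
move=> [i j] [i' j'] h.
have hU : U i \in E (i', j') by rewrite -h set21.
move: hU; rewrite in_set2 UW_neq orbF => /eqP/U_inj /= hi; subst i'.
have hW : W (wp (i, j)) \in E (i, j') by rewrite -h set22.
by move: hW; rewrite in_set2 WU_neq /= => /eqP/W_inj/wp_inj ->.
Qed.

Lemma E_eq p x y : E p == [set x; y] ->
  (x = U p.1 /\ y = W (wp p)) \/ (x = W (wp p) /\ y = U p.1).
Proof.
move/eqP=> h.
have hx : x \in E p by rewrite h set21.
have hy : y \in E p by rewrite h set22.
have hu : U p.1 \in [set x; y] by rewrite -h set21.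
have hw : W (wp p) \in [set x; y] by rewrite -h set22.
move: hx hy hu hw; rewrite !in_set2.
case/orP=> /eqP ->; case/orP=> /eqP ->; rewrite ?UW_neq ?WU_neq ?eqxx /= ?orbF; auto; by [].
Qed.

Lemma adjE p : adjG (U p.1) (W (wp p)).
Proof. by apply/existsP; exists p. Qed.
Lemma adjE' p : adjG (W (wp p)) (U p.1).
Proof. by apply/existsP; exists p; rewrite /E setUC. Qed.

Lemma adj_cases x y : adjG x y -> exists p,
  (x = U p.1 /\ y = W (wp p)) \/ (x = W (wp p) /\ y = U p.1).
Proof. by case/existsP=> p /E_eq h; exists p. Qed.

Lemma adj_sym : symmetric adjG.
Proof. by move=> x y; apply/existsP/existsP => -[p hp]; exists p; rewrite setUC. Qed.

Lemma adj_irr : irreflexive adjG.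
Proof.
move=> x; apply/negbTE/negP => hx; have [p [[h1 h2]|[h1 h2]]] := adj_cases hx;
  move: (UW_neq p.1 (wp p)); by rewrite -h1 -h2 eqxx.
Qed.


Lemma edgesE : edges adjG = [set E p | p : 'I_m * 'I_r].
Proof.
apply/setP => e; rewrite inE; apply/existsP/imsetP.
- case=> x /existsP [y /andP [hadj /eqP ->]].
  have [p [[-> ->]|[-> ->]]] := adj_cases hadj; exists p => //; by rewrite /E setUC.
- case=> p _ ->; exists (U p.1); apply/existsP; exists (W (wp p)).
  by rewrite adjE eqxx.
Qed.

Lemma memU i p : (U i \in E p) = (i == p.1).
Proof. by rewrite in_set2 UW_neq orbF (inj_eq U_inj). Qed.
Lemma memW l p : (W l \in E p) = (l == wp p).
Proof. by rewrite in_set2 WU_neq (inj_eq W_inj). Qed.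

Lemma fplusE g x : fplus adjG g x = \sum_p (if x \in E p then g (E p) else 0).
Proof.
rewrite /fplus big_mkcondr edgesE big_imset /=; last by move=> p q _ _ /E_inj.
by apply: eq_bigl => p; rewrite inE.
Qed.

Lemma sum_pair (G : 'I_m * 'I_r -> nat) : \sum_p G p = \sum_i \sum_j G (i, j).
Proof. by rewrite pair_big; apply: eq_bigr => -[a b]. Qed.

Lemma sum_all (G : 'I_m * 'I_r -> nat) (h : 'I_m * 'I_r -> 'I_m) :
  \sum_i \sum_p (if i == h p then G p else 0) = \sum_p G p.
Proof.
rewrite exchange_big; apply: eq_bigr => p _.
by rewrite -big_mkcond big_pred1_eq.
Qed.

Lemma sumUW g : \sum_i fplus adjG g (U i) = \sum_l fplus adjG g (W l).
Proof.
under eq_bigr do rewrite fplusE.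
under [RHS]eq_bigr do rewrite fplusE.
under eq_bigr do under eq_bigr do rewrite memU.
under [RHS]eq_bigr do under eq_bigr do rewrite memW.
by rewrite !sum_all.
Qed.

Lemma fplusU g i : fplus adjG g (U i) = \sum_(j < r) g (E (i, j)).
Proof.
rewrite fplusE sum_pair (bigD1 i) //= [X in _ + X]big1 ?addn0.
  by apply: eq_bigr => j _; rewrite memU eqxx.
move=> i' hi'; apply: big1 => j _; by rewrite memU /= eq_sym (negbTE hi').
Qed.

Lemma ML i l j : i < m -> l < m -> j <= m ->
  ((i + j) %% m == l) = (i == (l + m - j) %% m).
Proof.
move=> hi hl hj.
have e : l = (l + m - j + j) %% m.
  by rewrite subnK ?modnDr ?modn_small //; lia.
by rewrite {1}e eqn_modDr (modn_small hi).
Qed.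

Definition iw (l : 'I_m) (j : 'I_r) : 'I_m := inord ((l + m - j) %% m).

Lemma iw_val l j : (iw l j : nat) = (l + m - j) %% m.
Proof. by rewrite /iw inordK // ltn_pmod. Qed.

Lemma memW' l i j : (l == wp (i, j)) = (i == iw l j).
Proof.
rewrite -!val_eqE /= wp_val iw_val eq_sym ML //.
by apply: leq_trans (ltnW (ltn_ord j)) rm.
Qed.

Lemma fplusW g l : fplus adjG g (W l) = \sum_(j < r) g (E (iw l j, j)).
Proof.
rewrite fplusE sum_pair exchange_big; apply: eq_bigr => j _.
under eq_bigr do rewrite memW memW'.
by rewrite -big_mkcond big_pred1_eq.
Qed.


Definition lab (i j : nat) := j * m + (if odd j then m - i else i.+1).
Definition fl (e : {set 'I_(m + m)}) : nat := \sum_(p | E p == e) lab p.1 p.2.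

Lemma fl_E p : fl (E p) = lab p.1 p.2.
Proof.
rewrite /fl (eq_bigl (fun q => q == p)); first by rewrite big_pred1_eq.
by move=> q; rewrite (inj_eq E_inj).
Qed.

Local Notation k := r./2.
Lemma rk : r = k.*2. Proof. by rewrite even_halfK. Qed.

Definition Bt t := lab 0 t.*2 + lab 0 t.*2.+1.
Definition A := \sum_(0 <= t < k) Bt t.

Lemma ord_sum (F : nat -> nat) : \sum_(j < r) F j = \sum_(0 <= j < r) F j.
Proof. by rewrite big_mkord. Qed.

Lemma fl_U i : fplus adjG fl (U i) = A.
Proof.
rewrite fplusU; under eq_bigr do rewrite fl_E /=.
rewrite (ord_sum (fun j => lab i j)) {1}rk pair_sum /A.
apply: eq_big_nat => t _; rewrite /Bt /lab /= !odd_double /=.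
have := ltn_ord i; nia.
Qed.

Lemma col_pair (l t : nat) : l < m -> t.*2.+1 < r ->
  lab ((l + m - t.*2) %% m) t.*2 + lab ((l + m - t.*2.+1) %% m) t.*2.+1
   + m * (l == t.*2) = Bt t + 1.
Proof.
move=> hl ht.
rewrite /Bt /lab /= !odd_double /= !mod2 //; try lia.
case: eqP => [->|ne]; rewrite ?muln1 ?muln0;
  move: (t.*2 * m) (t.*2.+1 * m) => X Y; case: ifP => h1; case: ifP => h2; lia.
Qed.


Lemma fl_W (l : 'I_m) : fplus adjG fl (W l) + m * ((l < r) && ~~ odd l) = A + k.
Proof.
rewrite fplusW; under eq_bigr do rewrite fl_E /= iw_val.
rewrite (ord_sum (fun j => lab ((l + m - j) %% m) j)) {1 2}rk pair_sum -ceq -sum_mul.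
rewrite -big_split /=.
transitivity (\sum_(0 <= t < k) (Bt t + 1)); last first.
  by rewrite big_split /= sum_nat_const_nat subn0 muln1.
apply: eq_big_nat => t /andP [_ ht]; rewrite col_pair //.
rewrite rk; lia.
Qed.


Lemma card_edges : #|edges adjG| = m * r.
Proof. by rewrite edgesE card_imset; [rewrite card_prod !card_ord | exact: E_inj]. Qed.

Lemma lab_dec i j : i < m ->
  (lab i j).-1 %/ m = j /\ (lab i j).-1 %% m = (if odd j then m - i else i.+1).-1.
Proof.
move=> hi.
have e : (lab i j).-1 = j * m + (if odd j then m - i else i.+1).-1.
  rewrite /lab; move: (j * m) => X; case: ifP => _; lia.
have hh : (if odd j then m - i else i.+1).-1 < m by case: ifP => _; lia.
by rewrite e divnMDl // divn_small // addn0 modnMDl modn_small.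
Qed.

Lemma lab_inj i j i' j' : i < m -> i' < m -> lab i j = lab i' j' -> i = i' /\ j = j'.
Proof.
move=> hi hi' e.
have [d1 m1] := lab_dec j hi; have [d2 m2] := lab_dec j' hi'.
have ej : j = j' by rewrite -d1 -d2 e.
subst j'; split => //.
move: m1 m2; rewrite e => -> ; case: ifP => _; lia.
Qed.

Lemma lab_range i j : i < m -> j < r -> 1 <= lab i j <= m * r.
Proof.
move=> hi hj; rewrite /lab.
have := leq_mul hj (leqnn m); rewrite mulSn [r * m]mulnC.
move: (j * m) (m * r) => X Y; case: ifP => _; lia.
Qed.

Lemma fl_labeling : edge_labeling adjG fl.
Proof.
rewrite /edge_labeling card_edges edgesE; split; [|split].
- move=> e1 e2 /imsetP [p _ ->] /imsetP [q _ ->]; rewrite !fl_E => h.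
  have [h1 h2] := lab_inj (ltn_ord p.1) (ltn_ord q.1) h.
  by congr E; case: p q h1 h2 {h} => [a b] [c d] /= /val_inj -> /val_inj ->.
- move=> e /imsetP [p _ ->]; rewrite fl_E; exact: lab_range.
- move=> kk /andP [k1 k2].
  have m0 : 0 < m by [].
  set j := kk.-1 %/ m; set hh := kk.-1 %% m.
  have hhm : hh < m by rewrite ltn_pmod.
  have jr : j < r by rewrite ltn_divLR // -mulnC; lia.
  set i := if odd j then m - hh.+1 else hh.
  have him : i < m by rewrite /i; case: ifP => _; lia.
  exists (E (inord i, Ordinal jr)); first exact: imset_f.
  rewrite fl_E /= inordK // /lab /i.
  have := divn_eq kk.-1 m; rewrite -/j -/hh.
  move: (j * m) => X; case: (odd j) => /=; lia.
Qed.

Lemma k_pos : 0 < k. Proof. have := rk; lia. Qed.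
Lemma k_lt_m : k < m. Proof. have := rk; lia. Qed.

Lemma UW_diff i l : fplus adjG fl (U i) != fplus adjG fl (W l).
Proof.
have := fl_W l; rewrite fl_U; have := k_pos; have := k_lt_m.
case: ((l < r) && ~~ odd l) => /=; lia.
Qed.

Lemma fl_local : local_antimagic adjG fl.
Proof.
split; first exact: fl_labeling.
move=> x y /adj_cases [p [[-> ->]|[-> ->]]]; first exact: UW_diff.
by rewrite eq_sym UW_diff.
Qed.


Lemma r0 : 0 < r. Proof. lia. Qed.
Definition j0 : 'I_r := Ordinal r0.
Definition j1 : 'I_r := Ordinal r2.
Lemma m1 : 1 < m. Proof. lia. Qed.
Definition w1 : 'I_m := Ordinal m1.
Definition o0 : 'I_m := ord0.

Lemma wp0 (i : 'I_m) : wp (i, j0) = i.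
Proof. by apply: val_inj; rewrite /= wp_val /= addn0 modn_small. Qed.

Lemma mem_vals g v : (v \in undup [seq fplus adjG g x | x <- enum 'I_(m + m)])
   = [exists x, v == fplus adjG g x].
Proof.
rewrite mem_undup; apply/mapP/existsP => -[x].
  by move=> _ ->; exists x.
by move/eqP => ->; exists x; rewrite ?mem_enum.
Qed.

Lemma fl_colors : num_induced_colors adjG fl = 3.
Proof.
set v1 := fplus adjG fl (W o0); set v2 := fplus adjG fl (W w1).
have e1 := fl_W o0; have e2 := fl_W w1.
rewrite /= r0 in e1; rewrite /= r2 /= in e2.
have kp := k_pos; have km := k_lt_m.
rewrite /num_induced_colors.
have -> : size (undup [seq fplus adjG fl x | x <- enum 'I_(m + m)]) = size [:: A; v1; v2].
  apply: perm_size; apply: uniq_perm; first exact: undup_uniq.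
    rewrite /= !inE negb_or; apply/and3P; split; apply/eqP; lia.
  move=> v; rewrite mem_vals !inE; apply/existsP/idP.
    case=> x /eqP ->; case: (vertex_cases x) => -[y ->]; first by rewrite fl_U eqxx.
    have := fl_W y; case: ((y < r) && ~~ odd y) => /= h; apply/orP; right; apply/orP; lia.
  case/or3P => /eqP ->; [exists (U o0); by rewrite fl_U | by exists (W o0) | by exists (W w1)].
by [].
Qed.


Lemma lower g : local_antimagic adjG g -> 3 <= num_induced_colors adjG g.
Proof.
case=> _ hg; rewrite /num_induced_colors.
set L := undup _.
set a := fplus adjG g (U o0); set b := fplus adjG g (W o0).
have hab : a != b by have := hg _ _ (adjE (o0, j0)); rewrite wp0.
case: (leqP 3 (size L)) => // hlt; exfalso.
have two : forall x, fplus adjG g x = a \/ fplus adjG g x = b.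
  move=> x; case: (eqVneq (fplus adjG g x) a) => [->|ha]; first by left.
  case: (eqVneq (fplus adjG g x) b) => [->|hb]; first by right.
  have : size [:: a; b; fplus adjG g x] <= size L.
    apply: uniq_leq_size.
      by rewrite /= !inE negb_or hab eq_sym ha eq_sym hb.
    move=> v; rewrite !inE /L mem_vals => /or3P [] /eqP ->; apply/existsP;
      [exists (U o0) | exists (W o0) | exists x]; done.
  by move=> h; have := leq_ltn_trans h hlt; rewrite ltnn.
have hU : forall i, i < m -> fplus adjG g (U (inord i)) = a.
  elim=> [|i IH] hi.
    by rewrite (_ : inord 0 = o0) //; apply: val_inj; rewrite /= inordK.
  set w := W (wp (inord i, j1)).
  have h1 : adjG (U (inord i)) w by exact: (adjE (inord i, j1)).
  have e : wp (inord i, j1) = wp (inord i.+1, j0).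
    by apply: val_inj; rewrite /= !wp_val /= !inordK ?addn0 ?addn1 //; lia.
  have h2 : adjG (U (inord i.+1)) w by rewrite /w e; exact: (adjE (inord i.+1, j0)).
  have := hg _ _ h1; have := hg _ _ h2; rewrite IH; last lia.
  case: (two w) => ->; first by rewrite eqxx.
  by case: (two (U (inord i.+1))) => -> //; rewrite eqxx.
have hU' : forall i, fplus adjG g (U i) = a.
  by move=> i; rewrite -(inord_val i) hU.
have hW : forall l, fplus adjG g (W l) = b.
  move=> l; have := hg _ _ (adjE (l, j0)); rewrite wp0 hU'.
  by case: (two (W l)) => -> //; rewrite eqxx.
have := sumUW g; under eq_bigr do rewrite hU'; under [RHS]eq_bigr do rewrite hW.
rewrite !sum_nat_const card_ord => /eqP; rewrite eqn_pmul2l // => /eqP hab'.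
by rewrite hab' eqxx in hab.
Qed.


Lemma wp_iw l j : wp (iw l j, j) = l.
Proof. by apply/eqP; rewrite eq_sym memW'. Qed.

Lemma G_regular : regular adjG r.
Proof.
move=> x; case: (vertex_cases x) => -[y ->].
- have -> : [set z | adjG (U y) z] = [set W (wp (y, j)) | j : 'I_r].
    apply/setP => z; rewrite inE; apply/idP/imsetP.
      case/adj_cases => -[i j] [[/U_inj /= <- ->]|[/eqP]]; last by rewrite UW_neq.
      by exists j.
    by case=> j _ ->; exact: (adjE (y, j)).
  rewrite card_imset ?card_ord // => j j' /W_inj; exact: wp_inj.
- have -> : [set z | adjG (W y) z] = [set U (iw y j) | j : 'I_r].
    apply/setP => z; rewrite inE; apply/idP/imsetP.
      case/adj_cases => -[i j] [[/eqP]|[/W_inj /= e ->]]; first by rewrite WU_neq.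
      exists j => //; congr U; apply/eqP; by rewrite -memW' e.
    case=> j _ ->; have := adjE' (iw y j, j); by rewrite wp_iw.
  rewrite card_imset ?card_ord // => j j' /U_inj e.
  apply: (@wp_inj (iw y j)); by rewrite {2}e !wp_iw.
Qed.

Lemma G_connected : connected_graph adjG.
Proof.
have cs : connect_sym adjG := sym_connect_sym adj_sym.
have hU : forall i, i < m -> connect adjG (U (inord i)) (U o0).
  elim=> [|i IH] hi.
    by rewrite (_ : inord 0 = o0) //; apply: val_inj; rewrite /= inordK.
  set w := W (wp (inord i, j1)).
  have h1 : adjG (U (inord i)) w by exact: (adjE (inord i, j1)).
  have e : wp (inord i, j1) = wp (inord i.+1, j0).
    by apply: val_inj; rewrite /= !wp_val /= !inordK ?addn0 ?addn1 //; lia.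
  have h2 : adjG (U (inord i.+1)) w by rewrite /w e; exact: (adjE (inord i.+1, j0)).
  apply: connect_trans (connect1 h2) _.
  apply: (@connect_trans _ _ (U (inord i))); first by rewrite cs connect1.
  apply: IH; lia.
have hx : forall x, connect adjG x (U o0).
  move=> x; case: (vertex_cases x) => -[y ->].
    by rewrite -(inord_val y) hU.
  have h := adjE' (y, j0); rewrite wp0 in h.
  apply: connect_trans (connect1 h) _; by rewrite -(inord_val y) hU.
move=> x y; apply: connect_trans (hx x) _; by rewrite cs hx.
Qed.

Lemma G_chrom : chromatic_number_eq adjG 2.
Proof.
have h := adjE (o0, j0); rewrite wp0 in h.
split.
  exists (fun x => if x < m then ord0 else ord_max) => x y.
  case/adj_cases => p [[-> ->]|[-> ->]] /=; rewrite ltn_ord;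
    by rewrite ltnNge leq_addr.
case=> [|[|//]] _ [c hc].
  by case: (c (U o0)).
by have := hc _ _ h; rewrite !ord1 eqxx.
Qed.

End Constr.

Theorem mainTheorem7 (r : nat) :
  2 <= r -> ~~ odd r ->
  forall N : nat, exists n : nat, exists adj : rel 'I_n,
    [/\ N <= n, ~~ odd n, simple_graph adj, connected_graph adj &
        [/\ regular adj r, chi_la_eq adj 3 & chromatic_number_eq adj 2]].
Proof.
move=> r2 rev N.
have rm : r <= (N + r).+1 by lia.
exists ((N + r).+1 + (N + r).+1), (@adjG (N + r) r).
split.
- lia.
- by rewrite addnn odd_double.
- split; [exact: adj_sym | exact: adj_irr].
- exact: G_connected.
- split.
  + exact: G_regular.
  + split; first by exists (@fl (N + r) r); [exact: fl_local | exact: fl_colors].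
    by move=> g; apply: lower.
  + exact: G_chrom.
Qed.
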